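(* Let $(P,H,\phi)$ be a host-parasite triple and let $\mathcal R(P,H,\phi)$ be the set of all reconciliation maps for it. For all $\psi,\psi'\in\mathcal R(P,H,\phi)$ we have $d_{edit}(\psi,\psi')=d_{path}(\psi,\psi')$, where $$d_{path}(\psi,\psi')=\sum_{v\in V(P)} d_H(\psi(v),\psi'(v)).$$ In particular, since $d_{path}$ is a metric on $\mathcal R(P,H,\phi)$, so is $d_{edit}$.
   Context: A phylogenetic tree $T$ is a finite rooted tree with root $\rho_T$ (indegree $0$, outdegree $2$), in which every vertex other than the root and the leaves has indegree $1$ and outdegree $2$; $V(T)$ is its vertex set, $L(T)$ its leaf set, $V^o(T)=V(T)-L(T)$. For $v\in V^o(T)$, $Ch(v)$ is the set of children of $v$; for $v\ne\rho_T$, $par(v)$ is its parent. $x\succeq_T y$ means $x$ lies on the path from $\rho_T$ to $y$ (i.e. $x$ is an ancestor of $y$ or $x=y$); $x\succ_T y$ means $x\succeq_T y$ and $x\neq y$. For $L\subseteq L(T)$ with $|L|\ge 2$, $lca_T(L)$ is the lowest vertex above every element of $L$; if $L=\{x\}$ then $lca_T(L)=x$. $d_T(v,w)$ is the number of edges on the (undirected) path in $T$ between $v$ and $w$. A host-parasite triple $(P,H,\phi)$ consists of two phylogenetic trees $P,H$ and a map $\phi:L(P)\to L(H)$. A reconciliation map is a map $\psi:V(P)\to V(H)$ such that (i) $\psi$ restricted to $L(P)$ equals $\phi$, and (ii) for every $v\in V^o(P)$ and every child $v'$ of $v$, $\psi(v)\succeq_H\psi(v')$. For $v\in V(P)$ let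 $m(v)=lca_H(\{\phi(x): x\in L(P),\ v\succeq_P x\})$ and $A(v)=\{w\in V(H): \rho_H\succeq_H w\succeq_H m(v)\}$. Up operation: given $\psi\in\mathcal R(P,H,\phi)$ and $w\in V(P)$ with $\psi(w)\notin\{\rho_H,\psi(par(w))\}$ (the second condition being vacuous if $w=\rho_P$), $\psi^{up}_w$ is the map with $\psi^{up}_w(w)=par(\psi(w))$ and $\psi^{up}_w(v)=\psi(v)$ for $v\neq w$. Down operation: given $\psi\in\mathcal R(P,H,\phi)$ and $w\in V^o(P)$ with $\psi(w)\succ_H m(w)$ and $\psi(w)\ne\psi(v')$ for all $v'\in Ch(w)$, $\psi^{down}_w$ is the map with $\psi^{down}_w(w)$ the unique vertex of $A(w)\cap Ch(\psi(w))$ and $\psi^{down}_w(v)=\psi(v)$ for $v\ne w$. The edit-distance $d_{edit}(\psi,\psi')$ is the smallest number of up/down operations needed to transform $\psi$ into $\psi'$. *)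

(* Defs.v *)
(* Rooted trees are given on a finite vertex type V by a
   child relation [ch : rel V] (ch x y <-> y is a child of x) and a root. *)
From mathcomp Require Import all_boot.
Set Implicit Arguments. Unset Strict Implicit. Unset Printing Implicit Defensive.

Section Phylo.
Variable V : finType.
Variable ch : rel V.
Variable r : V.

Definition is_phylo : Prop :=
  [/\ forall x, ~~ ch x r,
      forall v, v != r -> #|[pred p | ch p v]| = 1,
      forall v, connect ch r v,
      #|[pred c | ch r c]| = 2 &
      forall v, #|[pred c | ch v c]| = 0 \/ #|[pred c | ch v c]| = 2].

Definition is_leaf (v : V) : bool := #|[pred c | ch v c]| == 0.

Definition anc (x y : V) : bool := connect ch x y.

(* lowest common ancestor of a (nonempty) set L; default r if none *)
Definition is_lca (L : {set V}) (w : V) : bool :=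
  [forall x in L, anc w x] &&
  [forall w', [forall x in L, anc w' x] ==> anc w' w].

Definition lca (L : {set V}) : V := odflt r [pick w | is_lca L w].

Definition usym (a b : V) : bool := ch a b || ch b a.

Definition dist (x y : V) : nat :=
  find (fun n => [exists t : n.-tuple V, path usym x t && (last x t == y)])
       (iota 0 #|V|).
End Phylo.

Section Reconc.
Variables VP VH : finType.
Variables (chP : rel VP) (rP : VP) (chH : rel VH) (rH : VH).
Variable phi : VP -> VH.   (* only its values on L(P) matter *)

Definition is_reconc (psi : VP -> VH) : Prop :=
  (forall x, is_leaf chP x -> psi x = phi x) /\
  (forall v v', chP v v' -> anc chH (psi v) (psi v')).

Definition mlca (v : VP) : VH :=
  lca chH rH [set phi x | x in [pred x | is_leaf chP x && anc chP v x]].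

Definition Aset (v : VP) : pred VH := fun w => anc chH w (mlca v).

Definition up_op (psi psi' : VP -> VH) (w : VP) : Prop :=
  is_reconc psi /\ psi w != rH /\
  (forall pw, chP pw w -> psi w != psi pw) /\
  exists p, [/\ chH p (psi w), psi' w = p & forall v, v != w -> psi' v = psi v].

Definition down_op (psi psi' : VP -> VH) (w : VP) : Prop :=
  is_reconc psi /\ ~~ is_leaf chP w /\
  (psi w != mlca w /\ anc chH (psi w) (mlca w)) /\
  (forall v', chP w v' -> psi w != psi v') /\
  exists c, [/\ chH (psi w) c, Aset w c, psi' w = c &
                forall v, v != w -> psi' v = psi v].

Definition edit_step (psi psi' : VP -> VH) : Prop :=
  exists w, up_op psi psi' w \/ down_op psi psi' w.

Fixpoint edit_reach (n : nat) (psi psi' : VP -> VH) : Prop :=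
  match n with
  | 0 => psi =1 psi'
  | k.+1 => exists psi1, edit_step psi psi1 /\ edit_reach k psi1 psi'
  end.

Definition is_edit_dist (psi psi' : VP -> VH) (k : nat) : Prop :=
  edit_reach k psi psi' /\ forall n, edit_reach n psi psi' -> k <= n.

Definition d_path (psi psi' : VP -> VH) : nat :=
  \sum_(v : VP) dist chH (psi v) (psi' v).
End Reconc.

(* Main.v *)
Require Import Defs.
From mathcomp Require Import all_boot zify.
Set Implicit Arguments. Unset Strict Implicit. Unset Printing Implicit Defensive.

Lemma t_nopr (V : finType) (ch : rel V) r (T : is_phylo ch r) x : ~~ ch x r.
Proof. by case: T. Qed.

Lemma t_paru (V : finType) (ch : rel V) r (T : is_phylo ch r) p q v :
  ch p v -> ch q v -> p = q.
Proof.
move=> hp hq; case: T => h1 h2 _ _ _.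
have vr : v != r by apply: contraTneq hp => ->; apply: h1.
have [x hx] := mem_card1 (h2 v vr).
have := hx p; have := hx q; rewrite !inE hp hq => /esym/eqP -> /esym/eqP -> //.
Qed.

Lemma t_parex (V : finType) (ch : rel V) r (T : is_phylo ch r) v :
  v != r -> exists p, ch p v.
Proof.
move=> vr; case: T => _ h2 _ _ _.
have [x hx] := mem_card1 (h2 v vr).
by exists x; have := hx x; rewrite !inE eqxx.
Qed.

Lemma anc_refl (V : finType) (ch : rel V) x : anc ch x x.
Proof. exact: connect0. Qed.

Lemma anc_trans (V : finType) (ch : rel V) x y z :
  anc ch x y -> anc ch y z -> anc ch x z.
Proof. exact: connect_trans. Qed.

Lemma ch_anc (V : finType) (ch : rel V) x y : ch x y -> anc ch x y.
Proof. exact: connect1. Qed.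

Lemma anc_root (V : finType) (ch : rel V) r (T : is_phylo ch r) v : anc ch r v.
Proof. by case: T. Qed.

Lemma t_up (V : finType) (ch : rel V) r (T : is_phylo ch r) p c u :
  ch p c -> anc ch u c -> u = c \/ anc ch u p.
Proof.
move=> hpc /connectP [s hs hl].
move: hs hl; case/lastP: s => [|s q] /=; first by move=> _ ->; left.
rewrite rcons_path last_rcons => /andP [hs hq] hl; subst q.
right; rewrite (t_paru T hpc hq); apply/connectP; by exists s.
Qed.

Lemma anc_r (V : finType) (ch : rel V) r (T : is_phylo ch r) x :
  anc ch x r -> x = r.
Proof.
move=> /connectP [s hs hl].
move: hs hl; case/lastP: s => [|s q] /=; first by [].
rewrite rcons_path last_rcons => /andP [hs hq] hl; subst q.
by have := t_nopr T (last x s); rewrite hq.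
Qed.

Lemma anc_first (V : finType) (ch : rel V) a b :
  anc ch a b -> a != b -> exists c, ch a c /\ anc ch c b.
Proof.
move=> /connectP [[|c s] /= hs hl]; first by rewrite hl eqxx.
move=> _; case/andP: hs => h1 h2; exists c; split => //.
by apply/connectP; exists s.
Qed.

Lemma t_acyc (V : finType) (ch : rel V) r (T : is_phylo ch r) x c :
  ch x c -> anc ch c x -> False.
Proof.
have: anc ch r x by apply: (anc_root T).
move=> /connectP [s hs hl]; elim/last_ind: s x hs hl c => [|s q IH] x /= hs hl c.
  subst x => hc /(anc_r T) e; subst c; by have := t_nopr T r; rewrite hc.
rewrite rcons_path last_rcons in hs hl; case/andP: hs => hs hq; subst q.
move=> hxc hcx; case: (t_up T hq hcx) => [e|hcp].
  subst c; have e := t_paru T hq hxc; subst x.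
  by apply: (IH _ hs erefl _ hxc hcx).
apply: (IH _ hs erefl _ hq); exact: anc_trans (ch_anc hxc) hcp.
Qed.

Lemma anc_antisym (V : finType) (ch : rel V) r (T : is_phylo ch r) x y :
  anc ch x y -> anc ch y x -> x = y.
Proof.
move=> hxy hyx; case: (eqVneq x y) => // ne.
have [c [hc hcy]] := anc_first hxy ne.
by case: (t_acyc T hc (anc_trans hcy hyx)).
Qed.

Lemma anc_total (V : finType) (ch : rel V) r (T : is_phylo ch r) a b x :
  anc ch a x -> anc ch b x -> anc ch a b \/ anc ch b a.
Proof.
move=> hax /connectP [s hs hl]; elim/last_ind: s x hs hl hax => [|s q IH] x /= hs hl hax.
  by subst x; left.
rewrite rcons_path last_rcons in hs hl; case/andP: hs => hs hq; subst q.
case: (t_up T hq hax) => [e|h]; last by apply: (IH _ hs erefl h).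
subst a; right; apply/connectP; exists (rcons s x) => //.
  by rewrite rcons_path hs hq.
by rewrite last_rcons.
Qed.

Definition depth (V : finType) (ch : rel V) v := #|[pred u | anc ch u v]|.

Lemma depth_le (V : finType) (ch : rel V) a b :
  anc ch a b -> depth ch a <= depth ch b.
Proof.
move=> h; apply: subset_leq_card; apply/subsetP => u; rewrite !inE => hu.
exact: anc_trans hu h.
Qed.

Lemma depth_lt (V : finType) (ch : rel V) r (T : is_phylo ch r) a b :
  anc ch a b -> a != b -> depth ch a < depth ch b.
Proof.
move=> h ne; apply: proper_card; apply/properP; split.
  apply/subsetP => u; rewrite !inE => hu; exact: anc_trans hu h.
exists b; rewrite !inE ?anc_refl //; apply/negP => hba.
by move: ne; rewrite (anc_antisym T h hba) eqxx.
Qed.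

Lemma depth_ch (V : finType) (ch : rel V) r (T : is_phylo ch r) p c :
  ch p c -> depth ch c = (depth ch p).+1.
Proof.
move=> h; rewrite /depth (cardD1 c) !inE anc_refl /=; congr S.
apply: eq_card => u; rewrite !inE; apply/andP/idP.
  by case=> ne hu; case: (t_up T h hu) => // e; move: ne; rewrite e eqxx.
move=> hu; split; last exact: anc_trans hu (ch_anc h).
by apply/eqP => e; subst u; apply: (t_acyc T h hu).
Qed.

Lemma depth_bnd (V : finType) (ch : rel V) v : 0 < depth ch v <= #|V|.
Proof.
rewrite max_card andbT; apply/card_gt0P; exists v; rewrite inE; exact: anc_refl.
Qed.

Definition W (V : finType) (ch : rel V) n x y :=
  exists s : seq V, [/\ size s = n, path (usym ch) x s & last x s = y].

Lemma WP (V : finType) (ch : rel V) n x y :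
  reflect (W ch n x y)
   [exists t : n.-tuple V, path (usym ch) x t && (last x t == y)].
Proof.
apply: (iffP existsP).
  by case=> t /andP [h1 /eqP h2]; exists t; rewrite size_tuple.
case=> s [hs h1 h2]; have hs' : size s == n by rewrite hs.
by exists (Tuple hs'); rewrite /= h1 h2 eqxx.
Qed.

Lemma dist_max (V : finType) (ch : rel V) x y : dist ch x y <= #|V|.
Proof. by rewrite /dist; have := find_size
  (fun n => [exists t : n.-tuple V, path (usym ch) x t && (last x t == y)])
  (iota 0 #|V|); rewrite size_iota. Qed.

Lemma dist_le (V : finType) (ch : rel V) n x y :
  W ch n x y -> n < #|V| -> dist ch x y <= n.
Proof.
move=> hW hn; rewrite /dist; set f := (fun n => _).
rewrite leqNgt; apply/negP => hlt.
have := before_find 0 hlt; rewrite nth_iota // add0n /f.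
by move/negbT/negP; apply; apply/WP.
Qed.

Lemma dist_W (V : finType) (ch : rel V) x y :
  dist ch x y < #|V| -> W ch (dist ch x y) x y.
Proof.
rewrite /dist; set f := (fun n => _) => h.
have hh : has f (iota 0 #|V|) by rewrite has_find size_iota.
have := nth_find 0 hh; rewrite nth_iota ?size_iota // add0n /f.
by move/WP.
Qed.

Lemma walk_depth (V : finType) (ch : rel V) r (T : is_phylo ch r) x s :
  path (usym ch) x s ->
  depth ch (last x s) <= depth ch x + size s /\
  depth ch x <= depth ch (last x s) + size s.
Proof.
elim: s x => [|y s IH] x /=; first by rewrite !addn0.
case/andP => hxy /IH [h1 h2].
have : depth ch y = (depth ch x).+1 \/ depth ch x = (depth ch y).+1.
  by case/orP: hxy => h; [left|right]; apply: (depth_ch T).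
case=> e; rewrite ?e in h1 h2 *; lia.
Qed.

Lemma walk_down (V : finType) (ch : rel V) r (T : is_phylo ch r) a b :
  anc ch a b -> W ch (depth ch b - depth ch a) a b.
Proof.
move: a; suff: forall k a, anc ch a b -> depth ch b - depth ch a = k -> W ch k a b.
  by move=> H a h; apply: H.
elim=> [|k IH] a h e.
  exists [::]; split => //=; apply: (anc_antisym T h).
  case: (eqVneq b a) => [-> |ne]; first exact: anc_refl.
  rewrite eq_sym in ne; have := depth_lt T h ne; lia.
case: (eqVneq a b) => [eab|ne]; first by subst; rewrite subnn in e.
have [c [hc hcb]] := anc_first h ne.
have dc := depth_ch T hc.
have e' : depth ch b - depth ch c = k by lia.
have [s [h1 h2 h3]] := IH c hcb e'.
exists (c :: s); split; [by rewrite /= h1 | by rewrite /= h2 /usym hc | by []].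
Qed.

Lemma walk_up (V : finType) (ch : rel V) r (T : is_phylo ch r) a b :
  anc ch a b -> W ch (depth ch b - depth ch a) b a.
Proof.
move: b; suff: forall k b, anc ch a b -> depth ch b - depth ch a = k -> W ch k b a.
  by move=> H b h; apply: H.
elim=> [|k IH] b h e.
  exists [::]; split => //=; apply/esym; apply: (anc_antisym T h).
  case: (eqVneq b a) => [-> |ne]; first exact: anc_refl.
  rewrite eq_sym in ne; have := depth_lt T h ne; lia.
case: (eqVneq a b) => [eab|ne]; first by subst; rewrite subnn in e.
have br : b != r.
  by apply/eqP => ebr; subst b; move: ne; rewrite (anc_r T h) eqxx.
have [p hp] := t_parex T br.
have dc := depth_ch T hp.
have hap : anc ch a p.
  case: (t_up T hp h) => // e'; by rewrite e' eqxx in ne.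
have e' : depth ch p - depth ch a = k by lia.
have [s [h1 h2 h3]] := IH p hap e'.
exists (p :: s); split; [by rewrite /= h1 | by rewrite /= h2 /usym hp orbT | by []].
Qed.

Lemma card_ge2 (V : finType) (ch : rel V) r (T : is_phylo ch r) : 2 <= #|V|.
Proof. case: T => _ _ _ h _; rewrite -h; exact: max_card. Qed.

Lemma distE (V : finType) (ch : rel V) r (T : is_phylo ch r) a b :
  anc ch a b ->
  dist ch a b = depth ch b - depth ch a /\ dist ch b a = depth ch b - depth ch a.
Proof.
move=> h.
have hb := depth_bnd ch b; have ha := depth_bnd ch a.
have hlt : depth ch b - depth ch a < #|V| by lia.
have hle := depth_le h.
have lo : forall x y, (x = a /\ y = b) \/ (x = b /\ y = a) ->
   depth ch b - depth ch a <= dist ch x y.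
  move=> x y hxy.
  case: (ltnP (dist ch x y) #|V|) => hd; last by lia.
  have [s [h1 h2 h3]] := dist_W hd.
  have := walk_depth T h2; rewrite h3 h1.
  by case: hxy => [[-> ->]|[-> ->]]; lia.
split; apply/eqP; rewrite eqn_leq.
  by rewrite (lo a b (or_introl (conj erefl erefl))) andbT; apply: dist_le (walk_down T h) hlt.
by rewrite (lo b a (or_intror (conj erefl erefl))) andbT; apply: dist_le (walk_up T h) hlt.
Qed.

Lemma dist_adj (V : finType) (ch : rel V) r (T : is_phylo ch r) a b :
  usym ch a b -> dist ch a b <= 1.
Proof.
move=> h; apply: dist_le; last exact: card_ge2 T.
by exists [:: b]; rewrite /= h.
Qed.

Lemma exmax (I : finType) (P : pred I) (F : I -> nat) :
  (exists i, P i) -> exists i, P i /\ forall j, P j -> F j <= F i.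
Proof.
case=> i0 h; case: (arg_maxnP F h) => i hi hm; exists i; split => // j /hm //.
Qed.

Lemma exmin (I : finType) (P : pred I) (F : I -> nat) :
  (exists i, P i) -> exists i, P i /\ forall j, P j -> F i <= F j.
Proof.
case=> i0 h; case: (arg_minnP F h) => i hi hm; exists i; split => // j /hm //.
Qed.

Lemma leaf_desc (V : finType) (ch : rel V) r (T : is_phylo ch r) v :
  exists x, is_leaf ch x && anc ch v x.
Proof.
have [x [hx hm]] := @exmax _ (fun x => anc ch v x) (depth ch) (ex_intro _ v (anc_refl ch v)).
exists x; rewrite hx andbT /is_leaf; apply/negPn/negP; rewrite -lt0n => /card_gt0P [c].
rewrite inE => hc; have := hm c (anc_trans hx (ch_anc hc)).
by rewrite (depth_ch T hc) ltnn.
Qed.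

Lemma lca_ok (V : finType) (ch : rel V) r (T : is_phylo ch r) (L : {set V}) :
  L != set0 -> is_lca ch L (lca ch r L).
Proof.
move=> /set0Pn [x0 hx0].
suff [w hw] : exists w, is_lca ch L w.
  by rewrite /lca; case: pickP => [y hy|/(_ w)] //=; rewrite hw.
pose C := fun w => [forall x in L, anc ch w x].
have hr : C r by apply/forall_inP => x _; exact: (anc_root T).
have [w [hw hm]] := @exmax _ C (depth ch) (ex_intro _ r hr).
exists w; apply/andP; split; first exact: hw.
apply/forallP => w'; apply/implyP => hw'.
have a1 := forall_inP hw x0 hx0; have a2 := forall_inP hw' x0 hx0.
case: (anc_total T a2 a1) => // h.
case: (eqVneq w w') => [-> |ne]; first exact: anc_refl.
by have := hm w' hw'; have := depth_lt T h ne; lia.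
Qed.

Definition Lset (VP VH : finType) (chP : rel VP) (phi : VP -> VH) v : {set VH} :=
  [set phi x | x in [pred x | is_leaf chP x && anc chP v x]].

Lemma mlca_ok (VP VH : finType) (chP : rel VP) rP (chH : rel VH) rH phi
  (TP : is_phylo chP rP) (TH : is_phylo chH rH) v :
  is_lca chH (Lset chP phi v) (mlca chP chH rH phi v).
Proof.
apply: (lca_ok TH); apply/set0Pn; have [x hx] := leaf_desc TP v.
by exists (phi x); apply/imsetP; exists x.
Qed.

Lemma reconc_anc (VP VH : finType) (chP : rel VP) (chH : rel VH) phi psi v x :
  is_reconc chP chH phi psi -> anc chP v x -> anc chH (psi v) (psi x).
Proof.
case=> _ he /connectP [s hs ->]; elim: s v hs => [|y s IH] v /=.
  by move=> _; exact: anc_refl.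
case/andP => h1 h2; exact: anc_trans (he _ _ h1) (IH _ h2).
Qed.

Lemma M1 (VP VH : finType) (chP : rel VP) rP (chH : rel VH) rH phi
  (TP : is_phylo chP rP) (TH : is_phylo chH rH) psi v :
  is_reconc chP chH phi psi -> anc chH (psi v) (mlca chP chH rH phi v).
Proof.
move=> hr; have /andP [_ /forallP h] := @mlca_ok VP VH chP rP chH rH phi TP TH v.
apply: (implyP (h (psi v))); apply/forall_inP => y /imsetP [x].
rewrite inE => /andP [hl hx] ->.
have <- := (proj1 hr) x hl; exact: reconc_anc hr hx.
Qed.

Lemma M2 (VP VH : finType) (chP : rel VP) rP (chH : rel VH) rH phi
  (TP : is_phylo chP rP) (TH : is_phylo chH rH) w v' :
  chP w v' -> anc chH (mlca chP chH rH phi w) (mlca chP chH rH phi v').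
Proof.
move=> hc; have /andP [_ /forallP h] := @mlca_ok VP VH chP rP chH rH phi TP TH v'.
have /andP [hw _] := @mlca_ok VP VH chP rP chH rH phi TP TH w.
apply: (implyP (h _)); apply/forall_inP => y /imsetP [x].
rewrite inE => /andP [hl hx] ->.
apply: (forall_inP hw); apply/imsetP; exists x => //.
by rewrite inE hl (anc_trans (ch_anc hc) hx).
Qed.

Lemma comp_reconc (VP VH : finType) (chP : rel VP) rP (chH : rel VH) rH phi
  (TP : is_phylo chP rP) (TH : is_phylo chH rH) psi psi' v :
  is_reconc chP chH phi psi -> is_reconc chP chH phi psi' ->
  anc chH (psi v) (psi' v) \/ anc chH (psi' v) (psi v).
Proof.
move=> h h'; exact: (anc_total TH (@M1 VP VH chP rP chH rH phi TP TH psi v h) (@M1 VP VH chP rP chH rH phi TP TH psi' v h')).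
Qed.

Definition dd (V : finType) (ch : rel V) a b :=
  (depth ch a - depth ch b) + (depth ch b - depth ch a).

Lemma distC (V : finType) (ch : rel V) r (T : is_phylo ch r) a b :
  anc ch a b \/ anc ch b a -> dist ch a b = dd ch a b.
Proof.
rewrite /dd; case=> h; have [h1 h2] := distE T h; have := depth_le h.
  by rewrite h1; lia.
by rewrite h2; lia.
Qed.

Lemma dd0 (V : finType) (ch : rel V) r (T : is_phylo ch r) a b :
  anc ch a b \/ anc ch b a -> dd ch a b = 0 -> a = b.
Proof.
rewrite /dd => h e; case: (eqVneq a b) => // ne; exfalso.
case: h => h.
  by have := depth_lt T h ne; lia.
by rewrite eq_sym in ne; have := depth_lt T h ne; lia.
Qed.

Lemma sum_step (I : finType) (w : I) (f g : I -> nat) :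
  (forall v, v != w -> f v = g v) -> f w <= g w + 1 ->
  \sum_v f v <= \sum_v g v + 1.
Proof.
move=> he hw; rewrite (bigD1 w) //= [X in _ <= X + _](bigD1 w) //=.
rewrite (eq_bigr g); first by lia.
by move=> v /he.
Qed.

Lemma sum_step_eq (I : finType) (w : I) (f g : I -> nat) :
  (forall v, v != w -> f v = g v) -> f w + 1 = g w ->
  \sum_v f v + 1 = \sum_v g v.
Proof.
move=> he hw; rewrite (bigD1 w) //= [X in _ = X](bigD1 w) //=.
rewrite (eq_bigr g); first by lia.
by move=> v /he.
Qed.

Lemma step_exists (VP VH : finType) (chP : rel VP) rP (chH : rel VH) rH phi
  (TP : is_phylo chP rP) (TH : is_phylo chH rH) psi psi' :
  is_reconc chP chH phi psi -> is_reconc chP chH phi psi' ->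
  (exists v, psi v != psi' v) ->
  exists psi2, [/\ edit_step chP chH rH phi psi psi2, is_reconc chP chH phi psi2 &
     d_path chH psi2 psi' + 1 = d_path chH psi psi'].
Proof.
move=> hr hr' hex.
have m1 := @M1 VP VH chP rP chH rH phi TP TH.
have m2 := @M2 VP VH chP rP chH rH phi TP TH.
have cr := @comp_reconc VP VH chP rP chH rH phi TP TH psi psi' _ hr hr'.
have dC := distC TH.
have [lf ed] := hr; have [lf' ed'] := hr'.
have nleaf : forall w, psi w != psi' w -> ~~ is_leaf chP w.
  move=> w ne; apply/negP => hl; by rewrite (lf _ hl) (lf' _ hl) eqxx in ne.
case: (boolP [exists v, (psi v != psi' v) && anc chH (psi' v) (psi v)]) => [hU|hU].
-
  have [w [/andP [hne ha] hm]] := @exmin _ (fun v => (psi v != psi' v) && anc chH (psi' v) (psi v))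
     (depth chP) (existsP hU).
  have wnl := nleaf w hne.
  have wr : psi w != rH.
    apply/eqP => e; rewrite e in hne ha; by rewrite (anc_r TH ha) eqxx in hne.
  have [p hp] := t_parex TH wr.
  have npw : forall pw, chP pw w -> psi w != psi pw.
    move=> pw hpw; apply/negP => /eqP e.
    have h1 := ed' _ _ hpw.
    have hU' : (psi pw != psi' pw) && anc chH (psi' pw) (psi pw).
      rewrite -e (anc_trans h1 ha) andbT; apply/negP => /eqP e2.
      rewrite -e2 in h1; by rewrite (anc_antisym TH h1 ha) eqxx in hne.
    by have := hm _ hU'; rewrite (depth_ch TP hpw) ltnn.
  pose psi2 := fun v => if v == w then p else psi v.
  exists psi2; split.
  + exists w; left; split; first exact: hr.
    split; first exact: wr. split; first exact: npw.
    exists p; split => //; first by rewrite /psi2 eqxx.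
    by move=> v /negbTE; rewrite /psi2 => ->.
  + split.
      move=> x hl; rewrite /psi2; case: eqP => [e|_]; last exact: lf.
      by subst x; rewrite hl in wnl.
    move=> v v' hvv; rewrite /psi2; case: eqP => [ev|nv]; case: eqP => [ev'|nv'].
    * exact: anc_refl.
    * subst v; exact: anc_trans (ch_anc hp) (ed _ _ hvv).
    * subst v'; have := ed _ _ hvv; move/(t_up TH hp); case=> // e.
      by move: (npw _ hvv); rewrite e eqxx.
    * exact: ed.
  + apply: (@sum_step_eq _ w) => [v /negbTE|]; first by rewrite /psi2 => ->.
    rewrite /psi2 eqxx.
    have hp' : anc chH (psi' w) p.
      case: (t_up TH hp ha) => // e; by rewrite e eqxx in hne.
    rewrite (dC p (psi' w)); last by right.
    rewrite (dC (psi w) (psi' w)); last by right.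
    rewrite /dd (depth_ch TH hp); have := depth_le hp'; lia.
-
  have hD : exists v, (psi v != psi' v) && anc chH (psi v) (psi' v).
    case: hex => v ne; exists v; rewrite ne /=.
    case: (cr v) => // h; move/existsP: hU; case; exists v; by rewrite ne h.
  have [w [/andP [hne ha] hm]] := @exmax _ (fun v => (psi v != psi' v) && anc chH (psi v) (psi' v))
     (depth chP) hD.
  have wnl := nleaf w hne.
  have ncw : forall v', chP w v' -> psi w != psi v'.
    move=> v' hv; apply/negP => /eqP e.
    have h1 := ed' _ _ hv.
    have hD' : (psi v' != psi' v') && anc chH (psi v') (psi' v').
      rewrite -e (anc_trans ha h1) andbT; apply/negP => /eqP e2.
      rewrite -e2 in h1; by rewrite (anc_antisym TH ha h1) eqxx in hne.
    by have := hm _ hD'; rewrite (depth_ch TP hv) ltnn.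
  have [c [hc hct]] := anc_first ha hne.
  have hcm : anc chH c (mlca chP chH rH phi w) := anc_trans hct (m1 _ w hr').
  have hwm := m1 _ w hr.
  have nwm : psi w != mlca chP chH rH phi w.
    apply/negP => /eqP e; have := m1 _ w hr'; rewrite -e => h.
    by rewrite (anc_antisym TH ha h) eqxx in hne.
  pose psi2 := fun v => if v == w then c else psi v.
  exists psi2; split.
  + exists w; right; split; first exact: hr.
    split; first exact: wnl. split; first by split.
    split; first exact: ncw.
    exists c; split => //; first by rewrite /psi2 eqxx.
    by move=> v /negbTE; rewrite /psi2 => ->.
  + split.
      move=> x hl; rewrite /psi2; case: eqP => [e|_]; last exact: lf.
      by subst x; rewrite hl in wnl.
    move=> v v' hvv; rewrite /psi2; case: eqP => [ev|nv]; case: eqP => [ev'|nv'].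
    * exact: anc_refl.
    * subst v.
      have h1 := m1 _ v' hr.
      have h2 := anc_trans hcm (m2 _ _ hvv).
      case: (anc_total TH h2 h1) => // h3.
      case: (t_up TH hc h3) => [->|h4]; first exact: anc_refl.
      by move: (ncw _ hvv); rewrite (anc_antisym TH (ed _ _ hvv) h4) eqxx.
    * subst v'; exact: anc_trans (ed _ _ hvv) (ch_anc hc).
    * exact: ed.
  + apply: (@sum_step_eq _ w) => [v /negbTE|]; first by rewrite /psi2 => ->.
    rewrite /psi2 eqxx.
    rewrite (dC c (psi' w)); last by left.
    rewrite (dC (psi w) (psi' w)); last by left.
    have := depth_le hct; rewrite /dd (depth_ch TH hc); lia.
Qed.

Lemma dist_refl (V : finType) (ch : rel V) r (T : is_phylo ch r) x : dist ch x x = 0.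
Proof. by rewrite (distC T (or_introl (anc_refl ch x))) /dd subnn. Qed.

Lemma lower_bound (VP VH : finType) (chP : rel VP) rP (chH : rel VH) rH phi
  (TP : is_phylo chP rP) (TH : is_phylo chH rH) psi' :
  is_reconc chP chH phi psi' ->
  forall n psi, edit_reach chP chH rH phi n psi psi' -> d_path chH psi psi' <= n.
Proof.
move=> hr'; have m1 := @M1 VP VH chP rP chH rH phi TP TH.
have dC := distC TH.
elim=> [|n IH] psi /=.
  move=> h; rewrite leqn0 /d_path; apply/eqP; apply: big1 => v _.
  by rewrite h (dist_refl TH).
case=> psi1 [[w hw] hreach]; have := IH _ hreach.
suff: d_path chH psi psi' <= d_path chH psi1 psi' + 1 by lia.
have [x [hr hx e1 e2 hadj]] : exists x, [/\ is_reconc chP chH phi psi,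
   anc chH x (mlca chP chH rH phi w), psi1 w = x, forall v, v != w -> psi1 v = psi v &
   depth chH x = (depth chH (psi w)).+1 \/ depth chH (psi w) = (depth chH x).+1].
  case: hw => [[hr [_ [_ [p [hp e1 e2]]]]]|[hr [_ [_ [_ [c [hc hA e1 e2]]]]]]].
    exists p; split => //; last by right; apply: (depth_ch TH hp).
    exact: anc_trans (ch_anc hp) (m1 _ w hr).
  exists c; split => //; last by left; apply: (depth_ch TH hc).
apply: (@sum_step _ w) => [v /e2 -> //|].
rewrite e1.
have c1 := anc_total TH (m1 _ w hr) (m1 _ w hr').
have c2 := anc_total TH hx (m1 _ w hr').
rewrite (dC _ _ c1) (dC _ _ c2) /dd; lia.
Qed.

Lemma upper_bound (VP VH : finType) (chP : rel VP) rP (chH : rel VH) rH phi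
  (TP : is_phylo chP rP) (TH : is_phylo chH rH) psi' :
  is_reconc chP chH phi psi' ->
  forall n psi, is_reconc chP chH phi psi -> d_path chH psi psi' = n ->
  edit_reach chP chH rH phi n psi psi'.
Proof.
move=> hr'; have m1 := @M1 VP VH chP rP chH rH phi TP TH.
have dC := distC TH.
elim=> [|n IH] psi hr e /=.
  move=> v; move/eqP: e; rewrite /d_path sum_nat_eq0 => /forallP /(_ v) /eqP.
  have c1 := anc_total TH (m1 _ v hr) (m1 _ v hr').
  by rewrite (dC _ _ c1); apply: (dd0 TH c1).
have hex : exists v, psi v != psi' v.
  case: (pickP (fun v => psi v != psi' v)) => [v hv|h]; first by exists v.
  move: e; rewrite /d_path big1 // => v _; move/negbT/negPn/eqP: (h v) => ->.
  exact: (dist_refl TH).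
have [psi2 [hs hr2 e2]] := step_exists TP TH hr hr' hex.
exists psi2; split => //; apply: IH => //; lia.
Qed.

Unset Implicit Arguments. Set Strict Implicit.

Theorem mainTheorem1 (VP VH : finType) (chP : rel VP) (rP : VP)
  (chH : rel VH) (rH : VH) (phi : VP -> VH) :
  is_phylo chP rP -> is_phylo chH rH ->
  (forall psi psi', is_reconc chP chH phi psi -> is_reconc chP chH phi psi' ->
     is_edit_dist chP chH rH phi psi psi' (d_path chH psi psi')) /\
  (* d_path (hence d_edit) is a metric on R(P,H,phi) *)
  (forall psi psi', is_reconc chP chH phi psi -> is_reconc chP chH phi psi' ->
     (d_path chH psi psi' = 0 <-> psi =1 psi') /\
     d_path chH psi psi' = d_path chH psi' psi) /\
  (forall psi1 psi2 psi3, is_reconc chP chH phi psi1 ->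
     is_reconc chP chH phi psi2 -> is_reconc chP chH phi psi3 ->
     d_path chH psi1 psi3 <= d_path chH psi1 psi2 + d_path chH psi2 psi3).
Proof.
move=> TP TH.
have m1 := @M1 VP VH chP rP chH rH phi TP TH.
have dC := distC TH.
split; [|split].
- move=> psi psi' hr hr'; split.
    exact: (upper_bound TP TH hr' hr erefl).
  move=> n; exact: (lower_bound TP TH hr').
- move=> psi psi' hr hr'; split; [split|].
  + move=> e; exact: (upper_bound TP TH hr' hr e).
  + move=> h; rewrite /d_path; apply: big1 => v _; rewrite h; exact: (dist_refl TH).
  + rewrite /d_path; apply: eq_bigr => v _.
    have c1 := anc_total TH (m1 _ v hr) (m1 _ v hr').
    have c2 := anc_total TH (m1 _ v hr') (m1 _ v hr).
    rewrite (dC _ _ c1) (dC _ _ c2) /dd; lia.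
- move=> psi1 psi2 psi3 h1 h2 h3; rewrite /d_path -big_split /=.
  apply: leq_sum => v _.
  have c1 := anc_total TH (m1 _ v h1) (m1 _ v h3).
  have c2 := anc_total TH (m1 _ v h1) (m1 _ v h2).
  have c3 := anc_total TH (m1 _ v h2) (m1 _ v h3).
  rewrite (dC _ _ c1) (dC _ _ c2) (dC _ _ c3) /dd; lia.
Qed.
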